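(* Let $(\mathcal G_A,p^A)$ and $(\mathcal G_B,p^B)$ be CPS's on the finite set $\Omega$ (satisfying the standing assumptions), each satisfying certainty reflection and being $1$-closed. Fix an event $E$ and $q_A,q_B\in[0,1]$. Then for all $n\ge0$, $A^n$ is $A$-saturated and $B^n$ is $B$-saturated; moreover $C^\infty$ is both $A$-saturated and $B$-saturated.
   Context: $\Omega$ is a finite set; every subset is an event. A CPS is a pair $(\mathcal G,p)$ where $\mathcal G$ is a family of nonempty subsets of $\Omega$ and $p$ assigns to each $G\in\mathcal G$ a probability measure $p_G$ on $\Omega$ with $p_G(G)=1$ and $p_G(E)=p_G(F)p_F(E)$ whenever $E\subseteq F\subseteq G$, $F,G\in\mathcal G$. Standing assumption: each conditioning family is closed under unions and nonempty intersections and covers $\Omega$. Atom: $m_i(\omega)=\bigcap\{G\in\mathcal G_i:\omega\in G\}$. $(\mathcal G_i,p^i)$ is $1$-closed if every $L\subseteq G$ with $G\in\mathcal G_i$ and $p^i_G(L)=1$ belongs to $\mathcal G_i$. Certainty reflection: for every event $E$, $q\in[0,1]$, $\omega$: $p^i_{m_i(\omega)}(E)=q$ implies $p^i_{m_i(\omega)}(\{\omega':p^i_{m_i(\omega')}(E)=q\})=1$. An event $F$ is $i$-saturated if $\omega\in F$ implies $m_i(\omega)\subseteq F$. $C_i(F)=\{\omega:p^i_{m_i(\omega)}(F)=1\}$. $A^0=\{\omega:p^A_{m_A(\omega)}(E)=q_A\}$, $B^0=\{\omega:p^B_{m_B(\omega)}(E)=q_B\}$, $A^{n+1}=A^n\cap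 C_A(B^n)$, $B^{n+1}=B^n\cap C_B(A^n)$, $C^\infty=\bigcap_{n\ge0}A^n\cap\bigcap_{n\ge0}B^n$. *)

(* Defs.v *)
(* A probability measure on the finite set Omega is given by its
   point masses: p G : T -> R, and p_G(E) = \sum_(x in E) p G x. *)
From HB Require Import structures.
From mathcomp Require Import all_boot all_order all_algebra.
Set Implicit Arguments. Unset Strict Implicit. Unset Printing Implicit Defensive.
Import Order.TTheory GRing.Theory Num.Theory.
Local Open Scope ring_scope.

Section CPS.
Variables (R : realFieldType) (T : finType).

Definition prob (p : {set T} -> T -> R) (G E : {set T}) : R :=
  \sum_(x in E) p G x.

Definition is_cps (fam : {set {set T}}) (p : {set T} -> T -> R) : Prop :=
  [/\ (forall G, G \in fam -> G != set0),
      (forall G, G \in fam -> (forall x, 0 <= p G x) /\ \sum_x p G x = 1),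
      (forall G, G \in fam -> prob p G G = 1) &
      (forall E F G : {set T}, F \in fam -> G \in fam -> E \subset F -> F \subset G ->
         prob p G E = prob p G F * prob p F E)].

Definition standing (fam : {set {set T}}) : Prop :=
  [/\ (forall G H, G \in fam -> H \in fam -> G :|: H \in fam),
      (forall G H, G \in fam -> H \in fam -> G :&: H != set0 -> G :&: H \in fam) &
      (forall w : T, exists2 G, G \in fam & w \in G)].

Definition atom (fam : {set {set T}}) (w : T) : {set T} :=
  \bigcap_(G in fam | w \in G) G.

Definition one_closed (fam : {set {set T}}) (p : {set T} -> T -> R) : Prop :=
  forall G L : {set T}, G \in fam -> L \subset G -> prob p G L = 1 -> L \in fam.

Definition certainty_reflection (fam : {set {set T}}) (p : {set T} -> T -> R)
  : Prop :=
  forall (E : {set T}) (q : R) (w : T),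
    0 <= q <= 1 ->
    prob p (atom fam w) E = q ->
    prob p (atom fam w) [set w' | prob p (atom fam w') E == q] = 1.

Definition saturatedP (fam : {set {set T}}) (P : T -> Prop) : Prop :=
  forall w, P w -> forall w', w' \in atom fam w -> P w'.

Definition saturated (fam : {set {set T}}) (F : {set T}) : Prop :=
  saturatedP fam (fun w => w \in F).

Definition certain (fam : {set {set T}}) (p : {set T} -> T -> R) (F : {set T})
  : {set T} := [set w | prob p (atom fam w) F == 1].

Fixpoint AB (famA famB : {set {set T}}) (pA pB : {set T} -> T -> R)
  (E : {set T}) (qA qB : R) (n : nat) : {set T} * {set T} :=
  match n with
  | 0 => ([set w | prob pA (atom famA w) E == qA],
          [set w | prob pB (atom famB w) E == qB])
  | n'.+1 => let: (a, b) := AB famA famB pA pB E qA qB n' in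
             (a :&: certain famA pA b, b :&: certain famB pB a)
  end.

Definition Cinf (famA famB : {set {set T}}) (pA pB : {set T} -> T -> R)
  (E : {set T}) (qA qB : R) (w : T) : Prop :=
  forall n, w \in (AB famA famB pA pB E qA qB n).1 /\
            w \in (AB famA famB pA pB E qA qB n).2.

End CPS.

(* Main.v *)
Require Import Defs.
From HB Require Import structures.
From mathcomp Require Import all_boot all_order all_algebra.
Import Order.TTheory GRing.Theory Num.Theory.
Local Open Scope ring_scope.

Section Aux.
Variables (R : realFieldType) (T : finType).

Lemma atom_in (fam : {set {set T}}) (w : T) :
  standing fam -> atom fam w \in fam /\ w \in atom fam w.
Proof.
case=> _ hI hC.
have: ((atom fam w \in fam) \/ atom fam w = setT) /\ w \in atom fam w.
  rewrite /atom; apply: (big_ind (fun X : {set T} => (X \in fam \/ X = setT) /\ w \in X)).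
  - split; [by right | by rewrite inE].
  - move=> X Y [[hX|->] wX] [[hY|->] wY].
    + split; last by rewrite inE wX wY.
      left; apply: hI => //; apply/set0Pn; exists w; by rewrite inE wX wY.
    + by rewrite setIT; split => //; left.
    + by rewrite setTI; split => //; left.
    + by rewrite setIT; split => //; right.
  - by move=> G /andP[GF wG]; split => //; left.
case=> [[h|h] hw]; first by split.
case: (hC w) => G GF wG.
have : atom fam w \subset G by rewrite /atom; apply: (bigcap_inf G); rewrite GF wG.
rewrite h => /subsetP sTG.
have GT : G = setT by apply/setP => x; rewrite inE; apply: sTG; rewrite inE.

by rewrite -GT; split => //; rewrite GT inE.
Qed.

Lemma mass_out (fam : {set {set T}}) (p : {set T} -> T -> R) G x :
  is_cps fam p -> G \in fam -> x \notin G -> p G x = 0.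
Proof.
case=> _ hP hG _ GF xG.
have [h0 h1] := hP G GF.
have := hG G GF; rewrite /prob => hs.
move: h1; rewrite (bigID (fun y => y \in G)) /= hs => /eqP.
rewrite -subr_eq0 addrC addrK => /eqP /psumr_eq0P => H.
by apply: H.
Qed.

Lemma prob_inter (fam : {set {set T}}) (p : {set T} -> T -> R) G (S : {set T}) :
  is_cps fam p -> G \in fam -> prob p G (G :&: S) = prob p G S.
Proof.
move=> hc GF; rewrite /prob [RHS](bigID (fun y => y \in G)) /=.
rewrite [X in _ = _ + X]big1 ?addr0; last by move=> i /andP[_ ]; apply: mass_out hc GF.
by apply: eq_bigl => x; rewrite inE andbC.
Qed.

Lemma key (fam : {set {set T}}) (p : {set T} -> T -> R) (S : {set T}) w :
  is_cps fam p -> standing fam -> one_closed fam p ->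
  w \in S -> prob p (atom fam w) S = 1 -> atom fam w \subset S.
Proof.
move=> hc hs h1 wS hp.
have [AF wA] := atom_in fam w hs.
have LF : atom fam w :&: S \in fam.
  apply: (h1 (atom fam w)) => //; first exact: subsetIl.
  by rewrite (prob_inter fam p (atom fam w) S hc AF).
have : atom fam w \subset atom fam w :&: S.
  rewrite {1}/atom; apply: (bigcap_inf (atom fam w :&: S)); by rewrite LF inE wA wS.
move=> h; apply: (subset_trans h); exact: subsetIr.
Qed.

Lemma level_sat (fam : {set {set T}}) (p : {set T} -> T -> R) F q :
  is_cps fam p -> standing fam -> one_closed fam p -> certainty_reflection fam p ->
  0 <= q <= 1 -> saturated fam [set w | prob p (atom fam w) F == q].
Proof.
move=> hc hs h1 hcr hq w; rewrite inE => /eqP hw w' hw'.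
have := hcr F q w hq hw => H.
have := key fam p _ w hc hs h1 _ H; rewrite inE hw eqxx => /(_ isT) /subsetP; apply.
exact: hw'.
Qed.

Lemma satI (fam : {set {set T}}) (X Y : {set T}) :
  saturated fam X -> saturated fam Y -> saturated fam (X :&: Y).
Proof.
move=> hX hY w; rewrite inE => /andP[wX wY] w' h; rewrite inE.
by rewrite (hX w wX w' h) (hY w wY w' h).
Qed.

End Aux.

Theorem lemma3 (R : realFieldType) (T : finType)
  (famA famB : {set {set T}}) (pA pB : {set T} -> T -> R)
  (E : {set T}) (qA qB : R) :
  is_cps famA pA -> standing famA ->
  certainty_reflection famA pA -> one_closed famA pA ->
  is_cps famB pB -> standing famB ->
  certainty_reflection famB pB -> one_closed famB pB ->
  0 <= qA <= 1 -> 0 <= qB <= 1 ->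
  (forall n : nat,
     saturated famA (AB famA famB pA pB E qA qB n).1 /\
     saturated famB (AB famA famB pA pB E qA qB n).2) /\
  saturatedP famA (Cinf famA famB pA pB E qA qB) /\
  saturatedP famB (Cinf famA famB pA pB E qA qB).
Proof.
move=> cA sA rA oA cB sB rB oB hA hB.
have one : (0 <= (1:R)) && ((1:R) <= 1) by rewrite ler01 lexx.
have H : forall n : nat,
     saturated famA (AB famA famB pA pB E qA qB n).1 /\
     saturated famB (AB famA famB pA pB E qA qB n).2.
  elim=> [|n [IA IB]] /=.
    by split; apply: level_sat.
  move: IA IB; case: (AB famA famB pA pB E qA qB n) => a b /= IA IB.
  split; apply: satI => //; exact: level_sat.
have HC : forall n w, Cinf famA famB pA pB E qA qB w ->
    w \in certain famA pA (AB famA famB pA pB E qA qB n).2 /\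
    w \in certain famB pB (AB famA famB pA pB E qA qB n).1.
  move=> n w /(_ n.+1) /=; case: (AB famA famB pA pB E qA qB n) => a b /=.
  by rewrite !inE => -[/andP[_ ->] /andP[_ ->]].
split => //; split=> w hw w' hw' n; have [h1 h2] := hw n; have [c1 c2] := HC n w hw; split.
- exact: ((H n).1 w h1 w' hw').
- move: c1; rewrite inE => /eqP c1.
  by move: (key _ _ _ _ _ _ cA sA oA h2 c1) => /subsetP; apply.
- move: c2; rewrite inE => /eqP c2.
  by move: (key _ _ _ _ _ _ cB sB oB h1 c2) => /subsetP; apply.
- exact: ((H n).2 w h2 w' hw').
Qed.
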